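(* Let $F|R$ be an extension of ordered fields. If there is at least one non-ball cut in $R$ that is filled in $F$, then there exists no injective map $\mathcal C(R)\to\mathcal C(F)$ that is continuous with respect to the interval topologies and compatible with restriction.
   Context: For an ordered field $K$ with canonical valuation $v$ (valuation ring the convex hull of $\mathbb Z$), a cut is a pair $(D,E)$ with $D<E$ and $D\cup E=K$; $\mathcal C(K)$ is the set of cuts, ordered by $(D_1,E_1)<(D_2,E_2)$ iff $D_1\subsetneq D_2$. The interval topology on $\mathcal C(K)$ has basic open sets the intervals $(C_1,C_2)$, $(C_1,(K,\emptyset)]$ and $[(\emptyset,K),C_2)$. For $a\in K$ and a final segment $S$ of $vK$, $B_S(a,K)=\{b\in K\mid v(a-b)\in S\cup\{\infty\}\}$ is a ball. For nonempty $A\subseteq K$, $A^+=(D,K\setminus D)$ with $D$ the smallest initial segment containing $A$, and $A^-=(K\setminus E,E)$ with $E$ the smallest final segment containing $A$. A cut is a ball cut if it is $B^+$ or $B^-$ for some ball $B$, otherwise a non-ball cut. A cut $(D,E)$ of $R$ is filled in $F$ if some $a\in F$ satisfies $D<a<E$. The restriction of a cut $(D',E')$ of $F$ is $(D'\cap R,E'\cap R)$; a map $\tilde\iota:\mathcal C(R)\to\mathcal C(F)$ is compatible with restriction if the restriction of $\tilde\iota(C)$ is $C$ for every $C$. *)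

(* Defs.v *)
From mathcomp Require Import all_boot all_order all_algebra.
Set Implicit Arguments. Unset Strict Implicit. Unset Printing Implicit Defensive.
Import Order.TTheory GRing.Theory Num.Theory.
Local Open Scope ring_scope.

Section Cuts.
Variable K : realFieldType.

(* Canonical valuation v (valuation ring = convex hull of Z):
   v x <= v y  iff  y/x lies in the valuation ring, i.e. |y| <= n |x| for some n.
   (for x, y <> 0) *)
Definition vle (x y : K) : Prop := exists n : nat, `|y| <= n%:R * `|x|.

(* A final segment S of the value group vK, represented by the set of nonzero
   elements whose value lies in S: it is upward closed for the value order. *)
Definition vfinal (S : K -> Prop) : Prop :=
  forall x y, x != 0 -> y != 0 -> S x -> vle x y -> S y.

(* B_S(a,K) = { b | v(a - b) \in S \cup {oo} } *)
Definition ballS (S : K -> Prop) (a : K) : K -> Prop :=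
  fun b => a - b = 0 \/ (a - b != 0 /\ S (a - b)).

Definition is_ball (B : K -> Prop) : Prop :=
  exists (S : K -> Prop) (a : K), vfinal S /\ B = ballS S a.

(* A cut (D,E) with D < E, D \cup E = K is determined by its lower part D,
   an arbitrary initial segment of K (possibly empty or all of K); E = K \ D. *)
Record cut := Cut {
  cutD : K -> Prop;
  cutD_init : forall x y, y <= x -> cutD x -> cutD y }.

Definition cut_lt (C1 C2 : cut) : Prop :=
  (forall x, cutD C1 x -> cutD C2 x) /\ exists x, cutD C2 x /\ ~ cutD C1 x.

Definition basic_open (B : cut -> Prop) : Prop :=
  (exists C1 C2, B = fun C => cut_lt C1 C /\ cut_lt C C2) \/
  (exists C1, B = fun C => cut_lt C1 C) \/
  (exists C2, B = fun C => cut_lt C C2).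

Definition interval_open (U : cut -> Prop) : Prop :=
  forall C, U C -> exists B, basic_open B /\ B C /\ forall C', B C' -> U C'.

Definition cut_plus_D (A : K -> Prop) : K -> Prop :=
  fun x => exists a, A a /\ x <= a.
(* A^- : E = smallest final segment containing A, D = K \ E *)
Definition cut_minus_D (A : K -> Prop) : K -> Prop :=
  fun x => ~ exists a, A a /\ a <= x.

Definition ball_cut (C : cut) : Prop :=
  exists B, is_ball B /\ (cutD C = cut_plus_D B \/ cutD C = cut_minus_D B).

End Cuts.

Definition interval_continuous (K L : realFieldType) (f : cut K -> cut L) : Prop :=
  forall U, interval_open U -> interval_open (fun C => U (f C)).

(* Extension F|R of ordered fields given by an order embedding iota. *)
Definition filled (R F : realFieldType) (iota : R -> F) (C : cut R) : Prop :=
  exists a : F, (forall d, cutD C d -> iota d < a) /\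
                (forall e, ~ cutD C e -> a < iota e).

Definition restrict_cut_D (R F : realFieldType) (iota : R -> F) (C : cut F)
  : R -> Prop := fun x => cutD C (iota x).

Definition compatible_restriction (R F : realFieldType) (iota : R -> F)
  (f : cut R -> cut F) : Prop :=
  forall C, restrict_cut_D iota (f C) = cutD C.

(* Main.v *)
Require Import Defs.
From mathcomp Require Import all_boot all_order all_algebra.
From Stdlib Require Import Classical FunctionalExtensionality PropExtensionality.
Import Order.TTheory GRing.Theory Num.Theory.
Local Open Scope ring_scope.

Section Aux.
Variable K : realFieldType.

Definition cutLt (x : K) : cut K :=
  @Cut K (fun z => z < x) (fun a b h (h' : a < x) => le_lt_trans h h').
Definition cutLe (x : K) : cut K :=
  @Cut K (fun z => z <= x) (fun a b h (h' : a <= x) => le_trans h h').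
Definition cutFull : cut K := @Cut K (fun _ => True) (fun _ _ _ _ => I).

Lemma ballS_pt (x b : K) : ballS (fun _ => False) x b <-> b = x.
Proof.
split.
- case=> [/eqP|[_ []]]; rewrite subr_eq0 => /eqP -> //.
- move=> ->; left; exact: subrr.
Qed.

Lemma ball_pt (x : K) : is_ball (ballS (fun _ => False) x).
Proof. exists (fun _ => False), x; split=> //. Qed.

Lemma ball_full : is_ball (ballS (fun _ => True) (0:K)).
Proof. exists (fun _ => True), 0; split=> //. Qed.

Lemma ballS_full (b : K) : ballS (fun _ => True) 0 b.
Proof.
case: (eqVneq (0 - b) 0) => h; [left; exact: h | right; split => //].
Qed.

Lemma cut_lt_trans (C1 C2 C3 : cut K) : cut_lt C1 C2 -> cut_lt C2 C3 -> cut_lt C1 C3.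
Proof.
move=> [s12 [x [h2 n1]]] [s23 [y [h3 n2]]]; split; first by move=> z /s12 /s23.
by exists x; split=> //; apply: s23.
Qed.

Lemma no_succ (C : cut K) : ~ ball_cut C ->
  forall C2, cut_lt C C2 -> exists C', cut_lt C C' /\ cut_lt C' C2.
Proof.
move=> nb C2 [sub [x [Hx2 Hnx]]].
case: (classic (exists y, y < x /\ ~ cutD C y)) => [[y [yx ny]]|H].
- exists (cutLt x); split.
  + split; last by exists y.
    move=> z Dz /=; rewrite ltNge; apply/negP => h; apply: Hnx; exact: cutD_init h Dz.
  + split; last by exists x; split => //=; rewrite ltxx.
    move=> z /= zx; exact: cutD_init (ltW zx) Hx2.
- exfalso; apply: nb; exists (ballS (fun _ => False) x); split; first exact: ball_pt.
  right; apply: functional_extensionality => z; apply: propositional_extensionality.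
  split.
  + move=> Dz [b [/ballS_pt -> xz]]; apply: Hnx; exact: cutD_init xz Dz.
  + move=> nex; apply: NNPP => nDz; case: (leP x z) => [xz|zx].
    * apply: nex; exists x; split => //; exact/ballS_pt.
    * apply: H; by exists z.
Qed.

Lemma no_pred (C : cut K) : ~ ball_cut C ->
  forall C1, cut_lt C1 C -> exists C', cut_lt C1 C' /\ cut_lt C' C.
Proof.
move=> nb C1 [sub [x [Hx Hnx1]]].
case: (classic (exists y, x < y /\ cutD C y)) => [[y [xy Dy]]|H].
- exists (cutLe x); split.
  + split; last by exists x; split => //=.
    move=> z Dz /=; rewrite leNgt; apply/negP => h; apply: Hnx1; exact: cutD_init (ltW h) Dz.
  + split; first by move=> z /= zx; exact: cutD_init zx Hx.
    by exists y; split => //= yx; move: xy; rewrite ltNge yx.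
- exfalso; apply: nb; exists (ballS (fun _ => False) x); split; first exact: ball_pt.
  left; apply: functional_extensionality => z; apply: propositional_extensionality.
  split.
  + move=> Dz; exists x; split; first exact/ballS_pt.
    rewrite leNgt; apply/negP => xz; apply: H; by exists z.
  + move=> [b [/ballS_pt -> zx]]; exact: cutD_init zx Hx.
Qed.

Lemma not_full (C : cut K) : ~ ball_cut C -> exists x, ~ cutD C x.
Proof.
move=> nb; apply: NNPP => H; apply: nb.
exists (ballS (fun _ => True) 0); split; first exact: ball_full.
left; apply: functional_extensionality => z; apply: propositional_extensionality.
split => [_|_]; first by exists z; split => //; exact: ballS_full.
by apply: NNPP => nz; apply: H; exists z.
Qed.

Lemma not_empty (C : cut K) : ~ ball_cut C -> exists x, cutD C x.
Proof.
move=> nb; apply: NNPP => H; apply: nb.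
exists (ballS (fun _ => True) 0); split; first exact: ball_full.
right; apply: functional_extensionality => z; apply: propositional_extensionality.
split => [Dz|nex]; first by exfalso; apply: H; exists z.
by exfalso; apply: nex; exists z; split => //; exact: ballS_full.
Qed.

Lemma up_in_open (C : cut K) (B : cut K -> Prop) : ~ ball_cut C ->
  basic_open B -> B C -> exists C', cut_lt C C' /\ B C'.
Proof.
move=> nb [[C1 [C2 ->]]|[[C1 ->]|[C2 ->]]].
- move=> [h1 h2]; have [C' [a b]] := @no_succ C nb _ h2.
  exists C'; split => //; split => //; exact: cut_lt_trans h1 a.
- move=> h1; have [x nx] := @not_full C nb.
  have lt : cut_lt C cutFull by split => //; exists x.
  exists cutFull; split => //; exact: cut_lt_trans h1 lt.
- move=> h2; have [C' [a b]] := @no_succ C nb _ h2; by exists C'.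
Qed.

Lemma down_in_open (C : cut K) (B : cut K -> Prop) : ~ ball_cut C ->
  basic_open B -> B C -> exists C', cut_lt C' C /\ B C'.
Proof.
move=> nb [[C1 [C2 ->]]|[[C1 ->]|[C2 ->]]].
- move=> [h1 h2]; have [C' [a b]] := @no_pred C nb _ h1.
  exists C'; split => //; split => //; exact: cut_lt_trans b h2.
- move=> h1; have [C' [a b]] := @no_pred C nb _ h1; by exists C'.
- move=> h2; have [x Dx] := @not_empty C nb.
  pose E := @Cut K (fun _ => False) (fun _ _ _ h => h).
  have lt : cut_lt E C by split; [move=> z; case | exists x; split].

  exists E; split => //; exact: cut_lt_trans lt h2.
Qed.

End Aux.
Arguments cutLt {K}.
Arguments cutLe {K}.

Theorem proposition4p7 (R F : realFieldType) (iota : {rmorphism R -> F})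
  (iota_mono : {mono iota : x y / x <= y}) :
  (exists C : cut R, ~ ball_cut C /\ filled iota C) ->
  ~ exists f : cut R -> cut F,
      injective f /\ interval_continuous f /\ compatible_restriction iota f.
Proof.
move=> [C [nb [a [Ha1 Ha2]]]] [f [_ [cont comp]]].
have compE C' y : cutD (f C') (iota y) <-> cutD C' y.
  by rewrite -(comp C').
case: (classic (cutD (f C) a)) => Hin.
- pose U := fun C' : cut F => cutD C' a.
  have oU : interval_open U.
    move=> C' HC'; exists (fun C'' => cut_lt (cutLt a) C''); split.
      by right; left; exists (cutLt a).
    split.
      split; last by exists a; split => //=; rewrite ltxx.
      move=> z /= za; exact: cutD_init (ltW za) HC'.
    move=> C'' [_ [x [Dx nx]]]; rewrite /U; apply: cutD_init Dx.
    by rewrite leNgt; apply/negP.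
  have [B [bo [BC sB]]] := cont U oU C Hin.
  have [C' [lt BC']] := @down_in_open R C B nb bo BC.
  have := sB C' BC'; rewrite /U => Ha.
  case: lt => _ [y [Dy nDy]].
  apply: nDy; apply/compE; apply: cutD_init Ha; exact: ltW (Ha1 y Dy).
- pose U := fun C' : cut F => ~ cutD C' a.
  have oU : interval_open U.
    move=> C' HC'; exists (fun C'' => cut_lt C'' (cutLe a)); split.
      by right; right; exists (cutLe a).
    split.
      split; last by exists a; split => //=.
      move=> z Dz /=; rewrite leNgt; apply/negP => az; apply: HC'.
      exact: cutD_init (ltW az) Dz.
    move=> C'' [_ [x [Dx nx]]] Ha; apply: nx; exact: cutD_init Dx Ha.
  have [B [bo [BC sB]]] := cont U oU C Hin.
  have [C' [lt BC']] := @up_in_open R C B nb bo BC.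
  have := sB C' BC'; rewrite /U => Ha.
  case: lt => _ [y [Dy nDy]].
  apply: Ha; apply: cutD_init (ltW (Ha2 y nDy)) _; exact/compE.
Qed.
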